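(* Let $\mathbf X$ be a deterministic $d\times m$ real matrix and $\boldsymbol\varepsilon=(\varepsilon_1,\dots,\varepsilon_m)$ a vector of i.i.d. Rademacher random variables. If $\|\mathbf X\|_F^2\le1/8$, then $$\mathbb E\big[\exp\{\|\mathbf X\boldsymbol\varepsilon\|_2^2\}\big]\le\exp\{10\|\mathbf X\|_F^2\}.$$
   Context: $\|\cdot\|_F$ is the Frobenius norm; a Rademacher variable takes values $\pm1$ with probability $1/2$ each. *)

(* Defs.v *)
From HB Require Import structures.
From mathcomp Require Import all_boot all_order all_algebra.
From mathcomp Require Import reals.
From mathcomp Require Import sequences exp.
Set Implicit Arguments. Unset Strict Implicit. Unset Printing Implicit Defensive.
Import Order.TTheory GRing.Theory Num.Theory.
Local Open Scope ring_scope.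

Definition frob2 (R : realType) (d m : nat) (X : 'M[R]_(d, m)) : R :=
  \sum_(i < d) \sum_(j < m) X i j ^+ 2.

Definition norm2sq (R : realType) (d : nat) (v : 'cV[R]_d) : R :=
  \sum_(i < d) v i 0 ^+ 2.

Definition sign_vec (R : realType) (m : nat) (s : {ffun 'I_m -> bool}) : 'cV[R]_m :=
  \col_(j < m) (if s j then 1 else -1).

(* Expectation of f(eps) for eps a vector of m i.i.d. Rademacher variables:
   eps is uniformly distributed on {-1,1}^m. *)
Definition rademacher_expect (R : realType) (m : nat) (f : 'cV[R]_m -> R) : R :=
  (2 ^+ m)^-1 * \sum_(s : {ffun 'I_m -> bool}) f (sign_vec R s).

(* Main.v *)
Require Import Defs.
From HB Require Import structures.
From mathcomp Require Import all_boot all_order all_algebra.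
From mathcomp Require Import reals sequences exp.
From mathcomp Require Import ring lra.
Import Order.TTheory GRing.Theory Num.Theory.
Local Open Scope ring_scope.
Set Implicit Arguments. Unset Strict Implicit. Unset Printing Implicit Defensive.

Section S.
Variable R : realType.

Lemma cosh_le (u : R) : expR u + expR (- u) <= 2 * expR (16 / 9 * u ^+ 2).
Proof.
have hp := expR_gt0 u; have hq := expR_gt0 (- u).
have hpq : expR u * expR (- u) = 1 by rewrite expRxMexpNx_1.
have e1 := expR_ge1Dx (16 / 9 * u ^+ 2).
have [hu|hu] := lerP (9/16) `|u|.
- have hh : (9/16 <= u) \/ (u <= -(9/16)).
    by move: hu; rewrite ler_normr => /orP[h|h]; [left|right]; lra.
  have h1 : u <= 16 / 9 * u ^+ 2 by case: hh => hh; nra.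
  have h2 : - u <= 16 / 9 * u ^+ 2 by case: hh => hh; nra.
  rewrite -ler_expR in h1; rewrite -ler_expR in h2; lra.
- have hu' : -(9/16) < u < 9/16 by rewrite -ltr_norml.
  case/andP: hu' => ha hb.
  have f1 := expR_ge1Dx (- u); have f2 := expR_ge1Dx u.
  have g1 : expR u * (1 - u) <= 1 by nra.
  have g2 : expR (- u) * (1 + u) <= 1 by nra.
  have g3 : (expR u + expR (- u)) * (1 - u ^+ 2) <= 2 by nra.
  have s1 : u ^+ 2 <= 81/256 by nra.
  have s0 : 0 <= u ^+ 2 by rewrite sqr_ge0.
  have g4 : 1 <= (1 + 16 / 9 * u ^+ 2) * (1 - u ^+ 2).
    move: s0 s1; set s := u ^+ 2 => s0 s1; nra.
  nra.
Qed.

Lemma cs_ineq (T : finType) (x y : T -> R) :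
  (\sum_t x t * y t) ^+ 2 <= (\sum_t x t ^+ 2) * (\sum_t y t ^+ 2).
Proof.
have E1 : (\sum_t x t * y t) ^+ 2 = \sum_t \sum_u (x t * y t) * (x u * y u).
  by rewrite expr2 mulr_suml; apply: eq_bigr => t _; rewrite mulr_sumr.
have E2 : (\sum_t x t ^+ 2) * (\sum_t y t ^+ 2) = \sum_t \sum_u x t ^+ 2 * y u ^+ 2.
  by rewrite mulr_suml; apply: eq_bigr => t _; rewrite mulr_sumr.
have E3 : \sum_t \sum_u x t ^+ 2 * y u ^+ 2 = \sum_t \sum_u x u ^+ 2 * y t ^+ 2.
  by rewrite exchange_big.
suff : 2 * (\sum_t x t * y t) ^+ 2 <= 2 * ((\sum_t x t ^+ 2) * (\sum_t y t ^+ 2)) by lra.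
have two : forall z : R, 2 * z = z + z by move=> z; ring.
rewrite E1 E2 !two {2}E3 -!big_split /=.
apply: ler_sum => t _; rewrite -!big_split /=; apply: ler_sum => u _.
have := sqr_ge0 (x t * y u - x u * y t); nra.
Qed.

Definition sg (b : bool) : R := if b then 1 else -1.

Lemma sg2 b : sg b ^+ 2 = 1.
Proof. by case: b; rewrite /sg ?expr1n ?sqrrN ?expr1n. Qed.

Variable m : nat.

Definition Qf (k : nat) (T : finType) (x : 'I_m -> T -> R) (s : {ffun 'I_m -> bool}) : R :=
  \sum_(i : T) (\sum_(j : 'I_m | (j < k)%N) sg (s j) * x j i) ^+ 2.

Definition Sf (k : nat) (T : finType) (x : 'I_m -> T -> R) : R :=
  \sum_(j : 'I_m | (j < k)%N) \sum_(i : T) x j i ^+ 2.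

Lemma split_lt k (hk : (k < m)%N) (F : 'I_m -> R) :
  \sum_(j : 'I_m | (j < k.+1)%N) F j = F (Ordinal hk) + \sum_(j : 'I_m | (j < k)%N) F j.
Proof.
rewrite (bigD1 (Ordinal hk)) //=; congr (_ + _); apply: eq_bigl => j.
by rewrite ltnS [(j < k)%N]ltn_neqAle andbC.
Qed.

Lemma sq_expand (T : finType) (c : R) (y w : T -> R) :
  \sum_t (c * y t + w t) ^+ 2 =
  c ^+ 2 * \sum_t y t ^+ 2 + 2 * c * \sum_t w t * y t + \sum_t w t ^+ 2.
Proof.
rewrite !mulr_sumr -!big_split /=; apply: eq_bigr => t _; ring.
Qed.

Lemma base (T : finType) (x : 'I_m -> T -> R) :
  \sum_(s : {ffun 'I_m -> bool}) expR (Qf 0 x s) = 2 ^+ m.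
Proof.
have Q0 : forall s, Qf 0 x s = 0.
  by move=> s; rewrite /Qf big1 // => i _; rewrite big_pred0 // expr2 mulr0.
rewrite (eq_bigr (fun _ => 1)); last by move=> s _; rewrite Q0 expR0.
rewrite sumr_const card_ffun card_bool card_ord.
by rewrite -natrX.
Qed.

Lemma sgN b : sg (~~ b) = - sg b.
Proof. by case: b; rewrite /sg ?opprK. Qed.

Lemma main k : (k <= m)%N -> forall (T : finType) (x : 'I_m -> T -> R),
  Sf k x <= 1/8 ->
  \sum_(s : {ffun 'I_m -> bool}) expR (Qf k x s) <= 2 ^+ m * expR (10 * Sf k x).
Proof.
elim: k => [_ T x _|k IH hk T x hS].
  rewrite base; have S0 : Sf 0 x = 0 by rewrite /Sf big_pred0.
  by rewrite S0 mulr0 expR0 mulr1.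
pose j0 := Ordinal hk.
pose y := x j0.
pose x' : 'I_m -> (T + bool)%type -> R := fun j i =>
  match i with inl t => x j t | inr b => if b then 8/3 * \sum_t x j t * y t else 0 end.
pose a := \sum_t y t ^+ 2.
pose w (s : {ffun 'I_m -> bool}) t := \sum_(j : 'I_m | (j < k)%N) sg (s j) * x j t.
pose flip (s : {ffun 'I_m -> bool}) : {ffun 'I_m -> bool} :=
  [ffun j => if j == j0 then ~~ s j else s j].
have flipK : involutive flip.
  by move=> s; apply/ffunP => j; rewrite !ffunE; case: eqP => //; rewrite negbK.
have wflip : forall s t, w (flip s) t = w s t.
  move=> s t; apply: eq_bigr => j hj; rewrite ffunE; case: eqP => // ej.
  by move: hj; rewrite ej /= ltnn.
have Qs : forall s, Qf k.+1 x s =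
    a + 2 * sg (s j0) * \sum_t w s t * y t + \sum_t w s t ^+ 2.
  move=> s; rewrite /Qf.
  under eq_bigr => t _ do rewrite (split_lt hk).
  by rewrite sq_expand sg2 mul1r.
have Qflip : forall s, Qf k.+1 x (flip s) =
    a - 2 * sg (s j0) * \sum_t w s t * y t + \sum_t w s t ^+ 2.
  move=> s; rewrite Qs ffunE eqxx sgN.
  under eq_bigr => t _ do rewrite wflip.
  rewrite mulrN mulNr; congr (_ - _ + _).
  by apply: eq_bigr => t _; rewrite wflip.
have Q' : forall s, Qf k x' s =
    64/9 * (\sum_t w s t * y t) ^+ 2 + \sum_t w s t ^+ 2.
  move=> s; rewrite /Qf big_sumType big_bool /=.
  have Z : \sum_(j : 'I_m | (j < k)%N) sg (s j) * (0:R) = 0.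
    by rewrite big1 // => j _; rewrite mulr0.
  rewrite Z expr0n /= addr0 addrC; congr (_ + _).
  have -> : \sum_(j : 'I_m | (j < k)%N) sg (s j) * (8 / 3 * \sum_t x j t * y t)
          = 8/3 * \sum_t w s t * y t.
    rewrite mulr_sumr /w.
    under [RHS]eq_bigr => t _ do rewrite mulr_suml mulr_sumr.
    rewrite [RHS]exchange_big /=; apply: eq_bigr => j _.
    rewrite !mulr_sumr; apply: eq_bigr => t _; ring.
  by rewrite exprMn; congr (_ * _); field.
have pt : forall s, expR (Qf k.+1 x s) + expR (Qf k.+1 x (flip s)) <=
    2 * (expR a * expR (Qf k x' s)).
  move=> s; rewrite Qs Qflip Q'.
  set P := \sum_t w s t * y t; set W := \sum_t w s t ^+ 2.
  set u := 2 * sg (s j0) * P.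
  have hu2 : 16 / 9 * u ^+ 2 = 64 / 9 * P ^+ 2.
    by rewrite /u !exprMn sg2 mulr1; field.
  have -> : a + u + W = (a + W) + u by ring.
  have -> : a - u + W = (a + W) + - u by ring.
  have -> : 64 / 9 * P ^+ 2 + W = W + 16 / 9 * u ^+ 2 by rewrite hu2 addrC.
  rewrite !expRD.
  have := cosh_le u; have := expR_gt0 (a + W); rewrite expRD.
  set e1 := expR a; set e2 := expR W; move=> h1 h2.
  have hW := expR_gt0 W; have ha := expR_gt0 a.
  nra.
have R1 : \sum_s expR (Qf k.+1 x (flip s)) = \sum_s expR (Qf k.+1 x s).
  by symmetry; exact: (reindex_inj (F := fun s => expR (Qf k.+1 x s)) (inv_inj flipK)).
have H2 : 2 * \sum_s expR (Qf k.+1 x s) <= 2 * (expR a * \sum_s expR (Qf k x' s)).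
  have -> : 2 * \sum_s expR (Qf k.+1 x s) =
     \sum_s (expR (Qf k.+1 x s) + expR (Qf k.+1 x (flip s))).
    by rewrite big_split /= R1; ring.
  rewrite !mulr_sumr; apply: ler_sum => s _; exact: pt.
pose C := \sum_(j : 'I_m | (j < k)%N) (\sum_t x j t * y t) ^+ 2.
have SX : Sf k x' = Sf k x + 64/9 * C.
  rewrite /Sf /C mulr_sumr -big_split /=; apply: eq_bigr => j _.
  rewrite big_sumType big_bool /= expr0n /= addr0; congr (_ + _).
  by rewrite exprMn; congr (_ * _); field.
have CS : C <= a * Sf k x.
  rewrite /Sf /C mulr_sumr; apply: ler_sum => j _.
  by rewrite mulrC; exact: cs_ineq.
have Sk1 : Sf k.+1 x = a + Sf k x by rewrite /Sf (split_lt hk).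
have S0 : 0 <= Sf k x by apply: sumr_ge0 => j _; apply: sumr_ge0 => t _; exact: sqr_ge0.
have a0 : 0 <= a by apply: sumr_ge0 => t _; exact: sqr_ge0.
have C0 : 0 <= C by apply: sumr_ge0 => j _; exact: sqr_ge0.
rewrite Sk1 in hS.
have hS' : Sf k x' <= 1/8 by rewrite SX; nra.
have IH' := IH (ltnW hk) _ x' hS'.
have Ex : a + 10 * Sf k x' <= 10 * Sf k.+1 x by rewrite SX Sk1; nra.
rewrite -ler_expR expRD in Ex.
move: H2 IH' Ex.
set Z := \sum_s expR (Qf k.+1 x s); set B := \sum_s expR (Qf k x' s).
set E := expR (10 * Sf k.+1 x); set e' := expR (10 * Sf k x').
have ha := expR_gt0 a; have hm : 0 < (2 : R) ^+ m by apply: exprn_gt0.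
move=> H2 IH' Ex.
have Z1 : Z <= expR a * B by lra.
have Z2 : expR a * B <= expR a * (2 ^+ m * e') by rewrite ler_pM2l.
have Z3 : 2 ^+ m * (expR a * e') <= 2 ^+ m * E by rewrite ler_pM2l.
nra.
Qed.

End S.

Theorem lemma9 (R : realType) (d m : nat) (X : 'M[R]_(d, m)) :
  frob2 X <= 1 / 8 ->
  rademacher_expect (fun eps : 'cV[R]_m => expR (norm2sq (X *m eps)))
    <= expR (10 * frob2 X).
Proof.
move=> hF.
pose x : 'I_m -> 'I_d -> R := fun j i => X i j.
have SF : Sf m x = frob2 X.
  rewrite /Sf /frob2 [RHS]exchange_big /= big_mkcond /=.
  by apply: eq_bigr => j _; rewrite ltn_ord.
have QF : forall s, norm2sq (X *m sign_vec R s) = Qf m x s.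
  move=> s; rewrite /norm2sq /Qf; apply: eq_bigr => i _; congr (_ ^+ 2).
  rewrite mxE [RHS]big_mkcond /=; apply: eq_bigr => j _.
  by rewrite ltn_ord /sign_vec mxE /sg mulrC.
have hS : Sf m x <= 1/8 by rewrite SF.
have H := @main R m m (leqnn m) _ x hS.
rewrite -SF /rademacher_expect.
rewrite (eq_bigr (fun s => expR (Qf m x s))); last by move=> s _; rewrite QF.
have hm : 0 < (2 : R) ^+ m by apply: exprn_gt0.
have hi : 0 <= (2 ^+ m : R)^-1 by rewrite invr_ge0 ltW.
have := ler_wpM2l hi H.
by rewrite mulrA mulVf ?mul1r // gt_eqF.
Qed.
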